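(* Let $U$ be a finite nonempty set, $R$ an equivalence relation on $U$, and $M(R)$ the support matroid induced by $R$. Then the family $\mathbf{B}(R)$ of bases of $M(R)$ is $$\mathbf{B}(R)=\{X\subseteq U\mid \forall x\in U,\ |RN(x)\cap X|=1\}.$$
   Context: For $x\in U$, $RN(x)=\{y\in U\mid xRy\}$; $R^{*}(X)=\{x\in U\mid RN(x)\cap X\neq\emptyset\}$. Let $\mathbf{S}(R)=\{X\subseteq U\mid R^{*}(X)=U\}$. The support matroid $M(R)=(U,\mathbf{I}(R))$ is the matroid on $U$ whose independent sets $\mathbf{I}(R)$ are the subsets of inclusion-minimal members of $\mathbf{S}(R)$; it is a matroid whose support sets (subsets of $U$ containing a base) are exactly the members of $\mathbf{S}(R)$. A base of a matroid is an inclusion-maximal independent set. *)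

(* Defs.v *)
From mathcomp Require Import all_boot.
Set Implicit Arguments. Unset Strict Implicit. Unset Printing Implicit Defensive.

Section Support.
Variables (U : finType) (R : rel U).

Definition RN (x : U) : {set U} := [set y | R x y].

Definition Rstar (X : {set U}) : {set U} := [set x | RN x :&: X != set0].

Definition supp_fam : {set {set U}} := [set X | Rstar X == setT].

Definition indep (I : {set U}) : Prop :=
  exists2 Y : {set U}, minset (fun Z => Z \in supp_fam) Y & I \subset Y.

Definition base (B : {set U}) : Prop :=
  indep B /\ forall I : {set U}, indep I -> B \subset I -> I = B.

End Support.

(* Main.v *)
Require Import Defs.
From mathcomp Require Import all_boot.

Lemma card_le1_eq (T : finType) (A : {set T}) a b :
  #|A| <= 1 -> a \in A -> b \in A -> a = b.
Proof.
move=> h ha hb; apply/eqP; apply: contraTT h => nab.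
have: [set a; b] \subset A by apply/subsetP => z; rewrite !inE => /orP[]/eqP->.
move/subset_leq_card; rewrite cards2 nab /=; case: #|A| => [|[|n]] //.
Qed.

Section S.
Variables (U : finType) (R : rel U).
Hypothesis eqR : equivalence_rel R.

Lemma Rrefl x : R x x.
Proof. by case: (equivalence_relP R) => h _; case: (h eqR). Qed.

Lemma RN_eq {x y} : y \in RN R x -> RN R x = RN R y.
Proof.
rewrite inE => hxy; case: (equivalence_relP R) => h _; case: (h eqR) => _ lt.
by apply/setP => z; rewrite !inE (lt _ _ hxy).
Qed.

Lemma inRN x : x \in RN R x.
Proof. by rewrite inE Rrefl. Qed.

Lemma suppP X : X \in supp_fam R <-> forall x, RN R x :&: X != set0.
Proof.
rewrite inE; split.
  move/eqP => h x; have: x \in Rstar R X by rewrite h inE.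
  by rewrite inE.
by move=> h; apply/eqP/setP => x; rewrite !inE h.
Qed.

Lemma minsuppP Y :
  minset (fun Z => Z \in supp_fam R) Y <-> forall x, #|RN R x :&: Y| = 1.
Proof.
split.
- move/minsetP => [/suppP hS hmin] x.
  have h1 : 0 < #|RN R x :&: Y| by rewrite card_gt0.
  apply/eqP; rewrite eqn_leq h1 andbT leqNgt; apply/negP => h2.
  have [a ha] : exists a, a \in RN R x :&: Y by apply/set0Pn; rewrite -card_gt0 ltnW.
  have: 0 < #|(RN R x :&: Y) :\ a| by rewrite (cardsD1 a) ha in h2.
  rewrite card_gt0 => /set0Pn [b]; rewrite !inE => /and3P [nba hb1 hb2].
  move: ha; rewrite inE => /andP [ha1 ha2].
  have hS' : (Y :\ a) \in supp_fam R.
    apply/suppP => z.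
    case: (boolP (a \in RN R z)) => haz.
      apply/set0Pn; exists b; rewrite !inE nba hb2 andbT.
      have: b \in RN R z by rewrite (RN_eq haz) -(RN_eq ha1) inE.
      by rewrite inE => ->.
    move: (hS z) => /set0Pn [c]; rewrite inE => /andP [hc1 hc2].
    apply/set0Pn; exists c; rewrite !inE hc2 andbT; move: (hc1); rewrite inE => ->; rewrite ?andbT /=.
    by apply: contraNneq haz => <-.
  have := hmin _ hS' (subD1set Y a) => /setP/(_ a); by rewrite !inE eqxx ha2.
- move=> h; apply/minsetP; split.
    by apply/suppP => x; rewrite -card_gt0 h.
  move=> Z /suppP hZ hZY; apply/eqP; rewrite eqEsubset hZY /=.
  apply/subsetP => y hy.
  move: (hZ y) => /set0Pn [z]; rewrite inE => /andP [hz1 hz2].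
  have ->: y = z.
    apply: (@card_le1_eq _ (RN R y :&: Y)); first by rewrite h.
      by rewrite inE inRN.
    by rewrite inE hz1 (subsetP hZY).
  exact: hz2.
Qed.

Lemma indepP I : indep R I <-> forall x, #|RN R x :&: I| <= 1.
Proof.
split.
- move=> [Y /minsuppP hY hIY] x; rewrite -(hY x).
  by apply: subset_leq_card; apply: setIS.
- move=> h.
  pose P := fun Z : {set U} => [forall x, #|RN R x :&: Z| <= 1].
  have hP : P I by apply/forallP.
  have [Y /maxsetP [/forallP hY hmax] hIY] := maxset_exists hP.
  exists Y => //; apply/minsuppP => x.
  apply/eqP; rewrite eqn_leq hY card_gt0 /=.
  apply/negP => /eqP he.
  have hP' : P (x |: Y).
    apply/forallP => z.
    case: (boolP (x \in RN R z)) => hxz.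
      rewrite (RN_eq hxz) setIUr he setU0.
      by rewrite (_ : RN R x :&: [set x] = [set x]) ?cards1 //;
        apply/setIidPr; rewrite sub1set inRN.
    rewrite setIUr (_ : RN R z :&: [set x] = set0) ?set0U ?hY //.
    by apply/setP => w; rewrite !inE; apply/negP => /andP [h1 /eqP e];
       subst w; rewrite inE h1 in hxz.
  have := hmax _ hP' (subsetUr _ _) => /setP/(_ x).
  rewrite !inE eqxx /= => hxY.
  by move: he => /setP/(_ x); rewrite !inE Rrefl -hxY.
Qed.

End S.

Theorem proposition5 (U : finType) (R : rel U) :
  0 < #|U| -> equivalence_rel R ->
  forall X : {set U}, base R X <-> (forall x : U, #|RN R x :&: X| = 1).
Proof.
move=> _ eqR X; split.
- move=> [hX hmax].
  have [Y hY hXY] := hX.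
  have hYi : indep R Y by exists Y.
  have <- := hmax _ hYi hXY.
  by case: (@minsuppP _ _ eqR Y) => h _; apply: h.
- move=> h; split.
    by exists X => //; case: (@minsuppP _ _ eqR X) => _ h2; apply: h2.
  move=> I /(@indepP _ _ eqR) hI hXI; apply/eqP; rewrite eqEsubset hXI andbT.
  apply/subsetP => i hi.
  have hsub : RN R i :&: X \subset RN R i :&: I by apply: setIS.
  have hs : RN R i :&: I \subset RN R i :&: X.
    by rewrite -(geq_leqif (subset_leqif_card hsub)) h hI.
  have := subsetP hs i; rewrite !inE (@Rrefl _ _ eqR) hi /= => /(_ isT).
  by [].
Qed.
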